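(* Let $M$ be the monoid (algebra in sets) generated by $a,b,d,e,f,h,i,j,k,l,n,o,p$ subject to the relations $ba=ed$, $ea=fb$, $hb=id$, $jb=kd$, $oi=pk$, $ej=ph$, $le=ek=pi$, $nf=oh=pj$. Then $M$ is basic-set, i.e. for all $u,v,x\in M$, $ux=vx$ implies $u=v$.
   Context: For an associative algebra viewed as an operad concentrated in arity $1$, the basic-set condition (injectivity of $\nu\mapsto\gamma(\nu;\nu_1)$) is right cancellativity of the underlying monoid. *)

(* Defs.v *)
(* The monoid M = <a,b,d,e,f,h,i,j,k,l,n,o,p | relations>
   is presented as words (lists of generators; concatenation = product,
   [x;y] = xy) modulo the monoid congruence generated by the relations. *)
From Stdlib Require Import List.
Import ListNotations.

Inductive gen : Type :=
  | ga | gb | gd | ge | gf | gh | gi | gj | gk | gl | gn | go | gp.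

Definition word := list gen.

Inductive rel0 : word -> word -> Prop :=
  | r_ba_ed : rel0 [gb; ga] [ge; gd]
  | r_ea_fb : rel0 [ge; ga] [gf; gb]
  | r_hb_id : rel0 [gh; gb] [gi; gd]
  | r_jb_kd : rel0 [gj; gb] [gk; gd]
  | r_oi_pk : rel0 [go; gi] [gp; gk]
  | r_ej_ph : rel0 [ge; gj] [gp; gh]
  | r_le_ek : rel0 [gl; ge] [ge; gk]
  | r_ek_pi : rel0 [ge; gk] [gp; gi]
  | r_nf_oh : rel0 [gn; gf] [go; gh]
  | r_oh_pj : rel0 [go; gh] [gp; gj].

Inductive mcong : word -> word -> Prop :=
  | mc_step : forall u v s t, rel0 s t -> mcong (u ++ s ++ v) (u ++ t ++ v)
  | mc_refl : forall w, mcong w w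
  | mc_sym : forall w1 w2, mcong w1 w2 -> mcong w2 w1
  | mc_trans : forall w1 w2 w3, mcong w1 w2 -> mcong w2 w3 -> mcong w1 w3.

(* Main.v *)
Require Import Defs.
From Stdlib Require Import List Arith Lia.
Import ListNotations.

Definition gen_eq_dec : forall a b : gen, {a = b} + {a <> b}.
Proof. decide equality. Defined.

Definition weq (l1 l2 : word) : bool :=
  if list_eq_dec gen_eq_dec l1 l2 then true else false.

Lemma weq_true : forall l1 l2, weq l1 l2 = true -> l1 = l2.
Proof. unfold weq; intros l1 l2; destruct (list_eq_dec gen_eq_dec l1 l2); congruence. Qed.

Definition allgens : list gen := [ga; gb; gd; ge; gf; gh; gi; gj; gk; gl; gn; go; gp].
Lemma all_in : forall g, In g allgens.
Proof. destruct g; simpl; tauto. Qed.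

Definition Rl : list (word * word) :=
  [([gb; ga], [ge; gd]); ([ge; ga], [gf; gb]); ([gh; gb], [gi; gd]);
   ([gj; gb], [gk; gd]); ([go; gi], [gp; gk]); ([ge; gj], [gp; gh]);
   ([gl; ge], [ge; gk]); ([ge; gk], [gp; gi]); ([gn; gf], [go; gh]);
   ([go; gh], [gp; gj])].

Lemma Rl_sound : forall s t, In (s, t) Rl -> rel0 s t.
Proof.
  intros s t H; simpl in H;
  repeat (destruct H as [H | H]; [inversion H; subst; constructor |]); contradiction.
Qed.

Lemma rel0_Rl : forall s t, rel0 s t -> In (s, t) Rl.
Proof. intros s t H; destruct H; simpl; tauto. Qed.

Lemma mcong_app_l : forall z a b, mcong a b -> mcong (z ++ a) (z ++ b).
Proof.
  intros z a b H; induction H.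
  - rewrite !(app_assoc z u). constructor; assumption.
  - apply mc_refl.
  - apply mc_sym; assumption.
  - eapply mc_trans; eassumption.
Qed.

Lemma mcong_app_r : forall z a b, mcong a b -> mcong (a ++ z) (b ++ z).
Proof.
  intros z a b H; induction H.
  - rewrite <- !app_assoc. constructor; assumption.
  - apply mc_refl.
  - apply mc_sym; assumption.
  - eapply mc_trans; eassumption.
Qed.

Definition rw (p : word) : list word :=
  flat_map (fun st => (if weq p (fst st) then [snd st] else [])
                        ++ (if weq p (snd st) then [fst st] else [])) Rl.

Lemma rw_sound : forall p q, In q (rw p) -> mcong p q.
Proof.
  intros p q H. unfold rw in H. apply in_flat_map in H.
  destruct H as [[s t] [Hin Hq]]. simpl in Hq.
  apply Rl_sound in Hin.
  apply in_app_or in Hq. destruct Hq as [Hq | Hq].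
  - destruct (weq p s) eqn:E; [|contradiction]. apply weq_true in E; subst.
    destruct Hq as [Hq|[]]; subst. pose proof (mc_step [] [] s q Hin) as X; simpl in X; rewrite !app_nil_r in X; exact X.
  - destruct (weq p t) eqn:E; [|contradiction]. apply weq_true in E; subst.
    destruct Hq as [Hq|[]]; subst. apply mc_sym. pose proof (mc_step [] [] q t Hin) as X; simpl in X; rewrite !app_nil_r in X; exact X.
Qed.

Fixpoint nbrs (w : word) : list word :=
  match w with
  | [] => []
  | x :: w' => map (cons x) (nbrs w') ++
      (match w' with c :: r => map (fun q => q ++ r) (rw [x; c]) | [] => [] end)
  end.

Lemma nbrs_sound : forall w w', In w' (nbrs w) -> mcong w w'.
Proof.
  induction w as [|x w IH]; simpl; intros w' H; [contradiction|].
  apply in_app_or in H; destruct H as [H|H].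
  - apply in_map_iff in H. destruct H as [v [Hv Hin]]; subst.
    apply (mcong_app_l [x]). auto.
  - destruct w as [|c r]; [contradiction|].
    apply in_map_iff in H. destruct H as [q [Hq Hin]]; subst.
    apply rw_sound in Hin. apply (mcong_app_r r [x;c] q) in Hin. exact Hin.
Qed.

Fixpoint clos (k : nat) (w : word) : list word :=
  match k with
  | 0 => [w]
  | S k' => let L := clos k' w in nodup (list_eq_dec gen_eq_dec) (L ++ flat_map nbrs L)
  end.

Lemma clos_sound : forall k w w', In w' (clos k w) -> mcong w w'.
Proof.
  induction k; simpl; intros w w' H.
  - destruct H as [H|[]]; subst; apply mc_refl.
  - apply nodup_In in H.
    apply in_app_or in H; destruct H as [H|H]; auto.
    apply in_flat_map in H. destruct H as [v [Hv Hin]].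
    eapply mc_trans; [apply (IHk w v Hv)|]. apply nbrs_sound; auto.
Qed.

Definition rank (g : gen) : nat :=
  match g with
  | gh => 0 | gb => 1 | ge => 2 | gl => 3 | gi => 4 | ga => 5 | gk => 6
  | gn => 7 | gj => 8 | gp => 9 | go => 10 | gf => 11 | gd => 12
  end.

Fixpoint lexlt (l1 l2 : list gen) : bool :=
  match l1, l2 with
  | x :: r1, y :: r2 => if Nat.ltb (rank x) (rank y) then true
                        else if Nat.eqb (rank x) (rank y) then lexlt r1 r2 else false
  | _, _ => false
  end.

Definition ltw (w1 w2 : word) : bool := lexlt (rev w1) (rev w2).

Definition minw (w : word) (L : list word) : word :=
  fold_left (fun m x => if ltw x m then x else m) L w.

Lemma minw_in : forall L w, minw w L = w \/ In (minw w L) L.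
Proof.
  unfold minw. induction L as [|x L IH]; simpl; intros w; [auto|].
  destruct (ltw x w).
  - destruct (IH x) as [H|H]; [rewrite H; auto | auto].
  - destruct (IH w) as [H|H]; [rewrite H; auto | auto].
Qed.

Definition nf (w : word) : word := minw w (clos 4 w).

Lemma nf_sound : forall w, mcong w (nf w).
Proof.
  intros w. unfold nf. destruct (minw_in (clos 4 w) w) as [H|H].
  - rewrite H; apply mc_refl.
  - apply (clos_sound 4); auto.
Qed.

Definition nf2p (z y : gen) : gen * gen :=
  match nf [z; y] with [a; b] => (a, b) | _ => (z, y) end.

Lemma nf2p_sound : forall z y a b, nf2p z y = (a, b) -> mcong [z; y] [a; b].
Proof.
  unfold nf2p; intros z y a b H.
  pose proof (nf_sound [z; y]) as Hn.
  destruct (nf [z; y]) as [|a' [|b' [|c' r]]]; inversion H; subst; try apply mc_refl.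
  exact Hn.
Qed.

Definition tau3 (z y g : gen) : gen * gen * gen :=
  let (a, b) := nf2p z y in
  match nf [a; b; g] with [p; q; r] => (p, q, r) | _ => (a, b, g) end.

Lemma tau3_sound : forall z y g p q r, tau3 z y g = (p, q, r) -> mcong [z; y; g] [p; q; r].
Proof.
  unfold tau3; intros z y g p q r H.
  destruct (nf2p z y) as [a b] eqn:E. apply nf2p_sound in E.
  apply (mcong_app_r [g]) in E. simpl in E.
  eapply mc_trans; [exact E|].
  pose proof (nf_sound [a; b; g]) as Hn.
  destruct (nf [a; b; g]) as [|p' [|q' [|r' [|s' l]]]]; inversion H; subst; try apply mc_refl.
  exact Hn.
Qed.

(* states are reversed words *)
Definition act (S : word) (g : gen) : word :=
  match S with
  | [] => [g]
  | [z] => let (a, b) := nf2p z g in [b; a]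
  | y :: z :: P => let '(p, q, r) := tau3 z y g in r :: q :: p :: P
  end.

Lemma act_len : forall S g, length (act S g) = Datatypes.S (length S).
Proof.
  intros S g; destruct S as [|y [|z P]]; simpl; auto.
  - destruct (nf2p y g); reflexivity.
  - destruct (tau3 z y g) as [[p q] r]; reflexivity.
Qed.

Lemma act_sound : forall S g, mcong (rev S ++ [g]) (rev (act S g)).
Proof.
  intros S g; destruct S as [|y [|z P]]; simpl.
  - apply mc_refl.
  - destruct (nf2p y g) as [a b] eqn:E. apply nf2p_sound in E. simpl. exact E.
  - destruct (tau3 z y g) as [[p q] r] eqn:E. apply tau3_sound in E. simpl.
    rewrite <- !app_assoc. simpl. apply mcong_app_l. exact E.
Qed.

Lemma act_app : forall y z P g, act (y :: z :: P) g = act [y; z] g ++ P.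
Proof.
  intros; simpl. destruct (tau3 z y g) as [[p q] r]; reflexivity.
Qed.

Lemma act_app2 : forall S P g, 2 <= length S -> act (S ++ P) g = act S g ++ P.
Proof.
  intros S P g H. destruct S as [|y [|z S']]; simpl in H; try lia.
  change ((y :: z :: S') ++ P) with (y :: z :: (S' ++ P)).
  rewrite (act_app y z (S' ++ P)), (act_app y z S'). rewrite <- app_assoc. reflexivity.
Qed.

Lemma fold_act_app : forall s M P, 2 <= length M ->
  fold_left act s (M ++ P) = fold_left act s M ++ P.
Proof.
  induction s as [|g s IH]; simpl; intros M P H; auto.
  rewrite act_app2 by auto. apply IH. rewrite act_len. lia.
Qed.

Definition actstar (w : word) : word := fold_left act w [].

Lemma actstar_sound : forall w, mcong w (rev (actstar w)).
Proof.
  induction w as [|g w IH] using rev_ind; simpl.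
  - apply mc_refl.
  - unfold actstar. rewrite fold_left_app. simpl. fold (actstar w).
    eapply mc_trans; [apply mcong_app_r; exact IH|]. apply act_sound.
Qed.

Definition smallM : list word :=
  [] :: map (fun z => [z]) allgens ++ flat_map (fun y => map (fun z => [y; z]) allgens) allgens.

Lemma smallM_in : forall M, length M <= 2 -> In M smallM.
Proof.
  intros M H. destruct M as [|y [|z [|w M]]]; simpl in H; try lia; unfold smallM.
  - left; auto.
  - right. apply in_or_app; left. apply (in_map (fun z => [z])). apply all_in.
  - right. apply in_or_app; right. apply in_flat_map. exists y; split; [apply all_in|].
    apply (in_map (fun z => [y; z])). apply all_in.
Qed.

Lemma relcheck_ok :
  forallb (fun st => forallb (fun M => weq (fold_left act (fst st) M) (fold_left act (snd st) M)) smallM) Rl = true.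
Proof. vm_compute. reflexivity. Qed.

Lemma rel_act : forall s t M, rel0 s t -> fold_left act s M = fold_left act t M.
Proof.
  intros s t M H. apply rel0_Rl in H.
  pose proof relcheck_ok as C. rewrite forallb_forall in C.
  specialize (C _ H). rewrite forallb_forall in C. cbn [fst snd] in C.
  destruct (Nat.le_gt_cases (length M) 2) as [HM|HM].
  - apply weq_true. apply C. apply smallM_in; auto.
  - destruct M as [|y [|z P]]; simpl in HM; try lia.
    change (y :: z :: P) with ([y; z] ++ P).
    rewrite !fold_act_app by (simpl; lia).
    f_equal. apply weq_true. apply C. apply smallM_in; simpl; lia.
Qed.

Lemma actstar_cong : forall a b, mcong a b -> actstar a = actstar b.
Proof.
  intros a b H; induction H; unfold actstar in *.
  - rewrite !fold_left_app. f_equal. apply rel_act; auto.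
  - reflexivity.
  - auto.
  - congruence.
Qed.

Definition goodS (S : word) : bool :=
  match S with
  | y :: z :: _ => weq [z; y] (let (a, b) := nf2p z y in [a; b])
  | _ => true
  end.

Lemma goodcheck_ok :
  forallb (fun M => forallb (fun g => goodS (act M g)) allgens) smallM = true.
Proof. vm_compute. reflexivity. Qed.

Lemma good_act : forall S g, goodS (act S g) = true.
Proof.
  intros S g.
  pose proof goodcheck_ok as C. rewrite forallb_forall in C.
  destruct (Nat.le_gt_cases (length S) 2) as [HM|HM].
  - specialize (C S (smallM_in _ HM)). rewrite forallb_forall in C. apply C, all_in.
  - destruct S as [|y [|z P]]; simpl in HM; try lia.
    rewrite act_app.
    specialize (C [y; z] (smallM_in [y; z] ltac:(simpl; lia))). rewrite forallb_forall in C.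
    specialize (C g (all_in g)).
    assert (L : length (act [y; z] g) = 3) by (rewrite act_len; reflexivity).
    destruct (act [y; z] g) as [|a [|b [|c [|d r]]]]; simpl in L; try lia.
    exact C.
Qed.

Definition pairsW : list word := flat_map (fun y => map (fun z => [y; z]) allgens) allgens.

Lemma pairsW_in : forall y z, In [y; z] pairsW.
Proof.
  intros. unfold pairsW. apply in_flat_map. exists y; split; [apply all_in|].
  apply (in_map (fun z => [y; z])), all_in.
Qed.

Lemma injcheck2_ok :
  forallb (fun g =>
    let L := map (fun M => (M, act M g)) (filter goodS pairsW) in
    forallb (fun p1 => forallb (fun p2 =>
      if weq (snd p1) (snd p2) then weq (fst p1) (fst p2) else true) L) L) allgens = true.
Proof. vm_compute. reflexivity. Qed.
Lemma injcheck1_ok :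
  forallb (fun g => forallb (fun z => forallb (fun z' =>
    if weq (act [z] g) (act [z'] g) then weq [z] [z'] else true) allgens) allgens) allgens = true.
Proof. vm_compute. reflexivity. Qed.

Lemma app_same_len : forall (l1 l2 r1 r2 : word), length l1 = length l2 ->
  l1 ++ r1 = l2 ++ r2 -> l1 = l2 /\ r1 = r2.
Proof.
  induction l1 as [|x l1 IH]; intros l2 r1 r2 HL H; destruct l2 as [|y l2]; simpl in *;
    try discriminate; auto.
  inversion H; subst. destruct (IH l2 r1 r2) as [-> ->]; auto.
Qed.

Lemma act_inj : forall S S' g, goodS S = true -> goodS S' = true ->
  act S g = act S' g -> S = S'.
Proof.
  intros S S' g HS HS' H.
  assert (HL : length S = length S') by
    (pose proof (act_len S g); pose proof (act_len S' g); rewrite H in *; congruence).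
  destruct S as [|y [|z P]]; destruct S' as [|y' [|z' P']]; simpl in HL; try discriminate; auto.
  - pose proof injcheck1_ok as C.     rewrite forallb_forall in C. specialize (C g (all_in g)).
    rewrite forallb_forall in C. specialize (C y (all_in y)).
    rewrite forallb_forall in C. specialize (C y' (all_in y')).
    assert (E : weq (act [y] g) (act [y'] g) = true) by
      (unfold weq; destruct (list_eq_dec gen_eq_dec (act [y] g) (act [y'] g)); congruence).
    rewrite E in C. apply weq_true in C. exact C.
  - rewrite (act_app y z P), (act_app y' z' P') in H.
    apply app_same_len in H; [|rewrite !act_len; reflexivity].
    destruct H as [H1 H2]. subst P'. enough (Hyz : [y; z] = [y'; z']) by (inversion Hyz; reflexivity).
    pose proof injcheck2_ok as C.     rewrite forallb_forall in C. specialize (C g (all_in g)). cbv beta zeta in C.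
    rewrite forallb_forall in C.
    assert (I1 : In ([y; z], act [y; z] g) (map (fun M => (M, act M g)) (filter goodS pairsW))).
    { apply (in_map (fun M => (M, act M g))). apply filter_In. split; [apply pairsW_in|]. exact HS. }
    assert (I2 : In ([y'; z'], act [y'; z'] g) (map (fun M => (M, act M g)) (filter goodS pairsW))).
    { apply (in_map (fun M => (M, act M g))). apply filter_In. split; [apply pairsW_in|]. exact HS'. }
    specialize (C _ I1). rewrite forallb_forall in C. specialize (C _ I2). cbv beta in C; cbn [fst snd] in C.
    rewrite H1 in C.
    assert (E : weq (act [y'; z'] g) (act [y'; z'] g) = true) by
      (unfold weq; destruct (list_eq_dec gen_eq_dec (act [y'; z'] g) (act [y'; z'] g)); congruence).
    rewrite E in C. apply weq_true in C. exact C.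
Qed.

Lemma good_actstar : forall w, goodS (actstar w) = true.
Proof.
  induction w as [|g w IH] using rev_ind; [reflexivity|].
  unfold actstar. rewrite fold_left_app. simpl. apply good_act.
Qed.

Lemma fold_inj : forall x S S', goodS S = true -> goodS S' = true ->
  fold_left act x S = fold_left act x S' -> S = S'.
Proof.
  induction x as [|g x IH]; simpl; intros S S' H1 H2 H; auto.
  apply IH in H; try apply good_act.
  apply act_inj in H; auto.
Qed.

Theorem mainTheorem11 :
  forall u v x : word, mcong (u ++ x) (v ++ x) -> mcong u v.
Proof.
  intros u v x H.
  apply actstar_cong in H. unfold actstar in H. rewrite !fold_left_app in H.
  apply fold_inj in H; try apply good_actstar.
  fold (actstar u) (actstar v) in H.
  eapply mc_trans; [apply actstar_sound|]. rewrite H.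
  apply mc_sym, actstar_sound.
Qed.
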